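(* Let $[W]\in\mathcal S$ be nonzero. Then the minimal weight of $[W]$ is $\ge 2$. If the minimal weight of $[W]$ is $2$, then up to a permutation of the three coordinates, $[W]$ has the form (1) $(a,a,0)$ with $a\in\Phi\setminus\{0\}$, or (2) $(a+b+c,a+c,b+c)$ with $a,b\in\Phi\setminus\{0\}$, $c\in\Psi$, $a+c$ and $b+c$ non-singular, and $a+b+c$ non-zero singular.
   Context: $EE_8=\sqrt2E_8$, $U=V_{EE_8}^+$; $R(U)$, the group (under fusion) of isomorphism classes of irreducible $U$-modules, $\cong\mathbb Z_2^{10}$, is a quadratic space over $\mathbb Z_2$ with $q([M])=0$ or $1$ according as the $L(0)$-weights of $M$ lie in $\mathbb Z$ or $\frac12+\mathbb Z$. Nonzero singular classes have minimal weight $1$ and non-singular classes have minimal weight $\frac12$. $R(U^{\otimes3})=R(U)^3$, where $(a,b,c)$ is the class of $A\otimes B\otimes C$, with $q(a,b,c)=q(a)+q(b)+q(c)$. $\Phi,\Psi$ are maximal totally singular subspaces of $R(U)$ with $\Phi\cap\Psi=0$; $\mathcal S=\mathrm{span}_{\mathbb Z_2}\{(a,a,0),(0,a,a),(b,b,b)\mid a\in\Phi,b\in\Psi\}$. The minimal weight of a class $[W]$ is the minimal $L(0)$-eigenvalue on the irreducible module $W$. *)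

(* Defs.v *)
From HB Require Import structures.
From mathcomp Require Import all_boot all_order all_algebra all_fingroup all_field.
Set Implicit Arguments. Unset Strict Implicit. Unset Printing Implicit Defensive.
Import Order.TTheory GRing.Theory Num.Theory.
Local Open Scope ring_scope.

(* Model of R(U) = R(V_{EE_8}^+) : the 10-dimensional quadratic space over
   Z_2 of plus type, i.e. F_2^10 with the hyperbolic form
   q(x) = sum_{i<5} x_i x_{i+5}.  *)
Definition RU := 'rV['F_2]_10.

Definition qf (x : RU) : 'F_2 :=
  \sum_(i < 5) x 0 (lshift 5 i) * x 0 (rshift 5 i).

(* classes of R(U^{\otimes 3}) = R(U)^3, as functions 'I_3 -> R(U) *)
Definition RU3 := {ffun 'I_3 -> RU}.

Definition trip (a b c : RU) : RU3 := [ffun i : 'I_3 => nth 0 [:: a; b; c] i].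

Definition permtrip (s : 'S_3) (W : RU3) : RU3 := [ffun i => W (s i)].

Definition totally_singular (P : {vspace RU}) : Prop :=
  forall x, x \in P -> qf x = 0.

Definition max_totally_singular (P : {vspace RU}) : Prop :=
  totally_singular P /\
  forall P' : {vspace RU}, totally_singular P' -> (P <= P')%VS -> P' = P.

Definition S_gens (Phi Psi : {vspace RU}) : seq RU3 :=
  [seq trip a a 0 | a <- enum [set x : RU | x \in Phi]] ++
  [seq trip 0 a a | a <- enum [set x : RU | x \in Phi]] ++
  [seq trip b b b | b <- enum [set x : RU | x \in Psi]].

Definition S_space (Phi Psi : {vspace RU}) : {vspace RU3} :=
  <<S_gens Phi Psi>>%VS.

(* minimal weight of an irreducible U-module class:
   0 for the class of U itself, 1 for nonzero singular, 1/2 for non-singular *)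
Definition minwt (x : RU) : rat :=
  if x == 0 then 0 else if qf x == 0 then 1 else 1 / 2.

(* minimal weight of the class of A (x) B (x) C is the sum *)
Definition minwt3 (W : RU3) : rat := minwt (W ord0) + minwt (W (inord 1)) + minwt (W (inord 2)).

(* Main.v *)
Require Import Defs.
From HB Require Import structures.
From mathcomp Require Import all_boot all_order all_algebra all_fingroup all_field.
From mathcomp Require Import ring lra.
Import Order.TTheory GRing.Theory Num.Theory.
Local Open Scope ring_scope.

Lemma F2_cases (t : 'F_2) : t = 0 \/ t = 1.
Proof. case: t => [[|[|//]]] H; [left|right]; exact: val_inj. Qed.

Lemma addxx (x : RU) : x + x = 0.
Proof. apply/rowP => i; rewrite !mxE; by case: (F2_cases (x 0 i)) => ->; apply/val_inj. Qed.

Lemma tripD a b c a' b' c' : trip a b c + trip a' b' c' = trip (a+a') (b+b') (c+c').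
Proof. apply/ffunP=> i; rewrite !ffunE; by case: i => [[|[|[|]]]]. Qed.

Lemma tripZ k a b c : k *: trip a b c = trip (k*:a) (k*:b) (k*:c).
Proof. apply/ffunP=> i; rewrite !ffunE; case: i => [[|[|[|]]]] //= _; by rewrite scaler0. Qed.

Lemma trip0 : trip 0 0 0 = 0.
Proof. apply/ffunP=> i; rewrite !ffunE; by case: i => [[|[|[|]]]]. Qed.

Lemma minwt3_trip x y z : minwt3 (trip x y z) = minwt x + minwt y + minwt z.
Proof. by rewrite /minwt3 !ffunE /= !inordK. Qed.

Lemma qf_cubic u v w : qf (u + v + w) = qf (u+v) + qf (u+w) + qf (v+w) - qf u - qf v - qf w.
Proof.
rewrite /qf -!big_split -!sumrN -!big_split /=; apply: eq_bigr => i _; rewrite !mxE; ring.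
Qed.

Lemma qf0 : qf 0 = 0.
Proof. rewrite /qf; apply: big1 => i _; by rewrite mxE mul0r. Qed.

Definition o0 : 'I_3 := @Ordinal 3 0 isT.
Definition o1 : 'I_3 := @Ordinal 3 1 isT.
Definition o2 : 'I_3 := @Ordinal 3 2 isT.

Lemma perm02 x y z : permtrip (tperm o0 o2) (trip x y z) = trip z y x.
Proof.
apply/ffunP=> i; rewrite !ffunE; case: i => [[|[|[|]]]] // H.
- rewrite (_ : Ordinal H = o0); last exact: val_inj. by rewrite tpermL.
- rewrite (_ : Ordinal H = o1); last exact: val_inj. by rewrite tpermD //.
- rewrite (_ : Ordinal H = o2); last exact: val_inj. by rewrite tpermR.
Qed.

Lemma perm01 x y z : permtrip (tperm o0 o1) (trip x y z) = trip y x z.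
Proof.
apply/ffunP=> i; rewrite !ffunE; case: i => [[|[|[|]]]] // H.
- rewrite (_ : Ordinal H = o0); last exact: val_inj. by rewrite tpermL.
- rewrite (_ : Ordinal H = o1); last exact: val_inj. by rewrite tpermR.
- rewrite (_ : Ordinal H = o2); last exact: val_inj. by rewrite tpermD.
Qed.

Lemma perm12 x y z : permtrip (tperm o1 o2) (trip x y z) = trip x z y.
Proof.
apply/ffunP=> i; rewrite !ffunE; case: i => [[|[|[|]]]] // H.
- rewrite (_ : Ordinal H = o0); last exact: val_inj. by rewrite tpermD.
- rewrite (_ : Ordinal H = o1); last exact: val_inj. by rewrite tpermL.
- rewrite (_ : Ordinal H = o2); last exact: val_inj. by rewrite tpermR.
Qed.

Lemma perm1 W : permtrip 1 W = W.
Proof. by apply/ffunP=> i; rewrite !ffunE perm1. Qed.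

Definition Pform (Phi Psi : {vspace RU}) (W : RU3) :=
  exists a1 a2 b, [/\ a1 \in Phi, a2 \in Phi, b \in Psi &
                      W = trip (a1 + b) (a1 + a2 + b) (a2 + b)].

Lemma S_form Phi Psi W : W \in S_space Phi Psi -> Pform Phi Psi W.
Proof.
move=> HW.
have := @coord_span _ _ _ (in_tuple (S_gens Phi Psi)) W HW => ->.
apply: (big_ind (Pform Phi Psi)).
- exists 0, 0, 0; split; rewrite ?mem0v //. by rewrite !addr0 trip0.
- move=> _ _ [a1 [a2 [b [H1 H2 H3 ->]]]] [a1' [a2' [b' [H1' H2' H3' ->]]]].
  exists (a1 + a1'), (a2 + a2'), (b + b'); split; rewrite ?memvD //.
  rewrite tripD; congr trip; apply/rowP => j; rewrite !mxE; ring.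
- move=> i _.
  have : (S_gens Phi Psi)`_i \in S_gens Phi Psi by apply: mem_nth; exact: ltn_ord.
  set k := coord _ _ _.
  rewrite /S_gens !mem_cat => /or3P [] /mapP [a]; rewrite mem_enum inE => Ha ->.
  + exists (k *: a), 0, 0; split; rewrite ?mem0v ?memvZ //.
    rewrite tripZ; congr trip; apply/rowP => j; rewrite !mxE; ring.
  + exists 0, (k *: a), 0; split; rewrite ?mem0v ?memvZ //.
    rewrite tripZ; congr trip; apply/rowP => j; rewrite !mxE; ring.
  + exists 0, 0, (k *: a); split; rewrite ?mem0v ?memvZ //.
    rewrite tripZ; congr trip; apply/rowP => j; rewrite !mxE; ring.
Qed.

Lemma minwt0 : minwt 0 = 0.
Proof. by rewrite /minwt eqxx. Qed.
Lemma minwt_s x : x != 0 -> qf x = 0 -> minwt x = 1.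
Proof. by rewrite /minwt => /negbTE -> ->; rewrite eqxx. Qed.
Lemma minwt_ns x : qf x = 1 -> minwt x = 1 / 2.
Proof.
move=> H; rewrite /minwt H oner_eq0.
case: eqP => // Hx; move: H; rewrite Hx qf0 => /eqP; by rewrite eq_sym oner_eq0.
Qed.

Arguments minwt_s {x}. Arguments minwt_ns {x}.
Lemma F2_11 : (1 + 1 : 'F_2) = 0.
Proof. exact: val_inj. Qed.

Theorem lemma2p19 (Phi Psi : {vspace RU}) :
  max_totally_singular Phi -> max_totally_singular Psi ->
  (Phi :&: Psi)%VS = 0%VS ->
  forall W : RU3, W \in S_space Phi Psi -> W != 0 ->
  2 <= minwt3 W /\
  (minwt3 W = 2 ->
   exists s : 'S_3,
     (exists a, [/\ a \in Phi, a != 0 & permtrip s W = trip a a 0]) \/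
     (exists a b c,
        [/\ a \in Phi, a != 0, b \in Phi, b != 0 & c \in Psi] /\
        [/\ qf (a + c) != 0, qf (b + c) != 0, a + b + c != 0,
            qf (a + b + c) = 0 &
            permtrip s W = trip (a + b + c) (a + c) (b + c)])).
Proof.
move=> [PhiS _] [PsiS _] Hcap W /S_form [a1 [a2 [b [H1 H2 H3 ->]]]] HW0.
have H12 : a1 + a2 \in Phi by rewrite memvD.
have q1 := PhiS _ H1; have q2 := PhiS _ H2; have q12 := PhiS _ H12.
have qb := PsiS _ H3.
have one0 : (1 : 'F_2) != 0 by rewrite oner_eq0.
case: (eqVneq b 0) => [Eb|Hb].
  subst b; rewrite !addr0 minwt3_trip in HW0 *.
  case: (eqVneq a1 0) => [E1|Ha1]; case: (eqVneq a2 0) => [E2|Ha2].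
  - by move: HW0; rewrite E1 E2 addr0 trip0 eqxx.
  - rewrite E1 add0r minwt0 (minwt_s Ha2 q2); split; first lra.
    move=> _; exists (tperm o0 o2); left; exists a2; split => //.
    by rewrite perm02.
  - rewrite E2 addr0 minwt0 (minwt_s Ha1 q1); split; first lra.
    move=> _; exists 1%g; left; exists a1; split => //.
    by rewrite perm1.
  - case: (eqVneq (a1 + a2) 0) => [E12|H12n].
    + rewrite E12 minwt0 (minwt_s Ha1 q1) (minwt_s Ha2 q2); split; first lra.
      move=> _; exists (tperm o1 o2); left; exists a1; split => //.
      rewrite perm12; congr trip.
      by rewrite -[a2]add0r -(addxx a1) -addrA E12 addr0.
    + rewrite (minwt_s Ha1 q1) (minwt_s Ha2 q2) (minwt_s H12n q12).
      split; first lra. move=> H; exfalso; move: H; clear; lra.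
have nz a : a \in Phi -> a + b != 0.
  move=> Ha; apply/negP => /eqP E.
  suff : b \in (Phi :&: Psi)%VS by rewrite Hcap memv0 (negbTE Hb).
    rewrite memv_cap H3 andbT.
    have -> : b = - a by apply/eqP; rewrite -addr_eq0 addrC E.
    by rewrite memvN.
have nzx := nz _ H1; have nzz := nz _ H2; have nzy := nz _ H12.
have qy : qf (a1 + a2 + b) = qf (a1 + b) + qf (a2 + b).
  by rewrite qf_cubic q12 q1 q2 qb !subr0 add0r.
rewrite minwt3_trip.
case: (F2_cases (qf (a1 + b))) => qx; case: (F2_cases (qf (a2 + b))) => qz;
  rewrite qx qz ?addr0 ?add0r ?F2_11 in qy.
- rewrite (minwt_s nzx qx) (minwt_s nzz qz) (minwt_s nzy qy).
  split; first lra. move=> H; exfalso; move: H; clear; lra.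
-
  rewrite (minwt_s nzx qx) (minwt_ns qz) (minwt_ns qy).
  split; first lra. move=> _.
  exists 1%g; right; exists (a1 + a2), a2, b; split.
  + split => //.
    * by apply/eqP => E; move: qy; rewrite E add0r qb => /eqP; rewrite eq_sym (negbTE one0).
    * by apply/eqP => E; move: qz; rewrite E add0r qb => /eqP; rewrite eq_sym (negbTE one0).
  + have E : a1 + a2 + a2 + b = a1 + b by rewrite -(addrA a1) addxx addr0.
    rewrite E qy qz; split => //.
    by rewrite perm1.
-
  rewrite (minwt_ns qx) (minwt_s nzz qz) (minwt_ns qy).
  split; first lra. move=> _.
  exists (tperm o0 o2); right; exists (a1 + a2), a1, b; split.
  + split => //.
    * by apply/eqP => E; move: qy; rewrite E add0r qb => /eqP; rewrite eq_sym (negbTE one0).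
    * by apply/eqP => E; move: qx; rewrite E add0r qb => /eqP; rewrite eq_sym (negbTE one0).
  + have E : a1 + a2 + a1 + b = a2 + b by rewrite (addrC a1 a2) -(addrA a2) addxx addr0.
    rewrite E qy qx; split => //.
    by rewrite perm02.
-
  rewrite (minwt_ns qx) (minwt_ns qz) (minwt_s nzy qy).
  split; first lra. move=> _.
  exists (tperm o0 o1); right; exists a1, a2, b; split.
  + split => //.
    * by apply/eqP => E; move: qx; rewrite E add0r qb => /eqP; rewrite eq_sym (negbTE one0).
    * by apply/eqP => E; move: qz; rewrite E add0r qb => /eqP; rewrite eq_sym (negbTE one0).
  + rewrite qx qz qy; split => //.
    by rewrite perm01.
Qed.
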